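(* Let $X=\{a,a+1,\dots,b\}\subseteq\mathbb{N}$ and let $f^\alpha:\mathcal{P}^n\to X$ be the median voter scheme with fixed ballots $\alpha=(\alpha_1,\dots,\alpha_{n-1})\in X^{n-1}$, $\alpha_1\le\dots\le\alpha_{n-1}$. Then $f^\alpha$ is NOM if and only if $\alpha_1\in\{a,a+1\}$ and $\alpha_{n-1}\in\{b-1,b\}$.
   Context: $N=\{1,\dots,n\}$, $n\ge2$; $X=\{a,a+1,\dots,b\}$ with $b=a+(m-1)$, $m\ge2$; $\mathcal{P}$ is the set of all strict linear orders on $X$ (not necessarily single-peaked); $t(P_i)$ the top of $P_i$. The median voter scheme is $f^\alpha(P)=\mathrm{med}\{t(P_1),\dots,t(P_n),\alpha_1,\dots,\alpha_{n-1}\}$, the median of these $2n-1$ numbers. Option set $O(P_i)=\{f(P_i,P_{-i}):P_{-i}\in\mathcal{P}^{n-1}\}$. $P_i'$ is a manipulation of $f$ at $P_i$ if $f(P_i',P_{-i})P_if(P_i,P_{-i})$ for some $P_{-i}$; it is obvious if the $P_i$-worst element of $O(P_i')$ is strictly $P_i$-better than the $P_i$-worst element of $O(P_i)$, or the $P_i$-best element of $O(P_i')$ is strictly $P_i$-better than the $P_i$-best element of $O(P_i)$. $f$ is not obviously manipulable (NOM) if it admits no obvious manipulation. *)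

(* Defs.v *)
From mathcomp Require Import all_boot.
Set Implicit Arguments. Unset Strict Implicit. Unset Printing Implicit Defensive.

Definition inX (a b x : nat) : Prop := a <= x <= b.

(* A (strict) preference on X is a boolean relation R on nat, where
   R x y means "x is strictly preferred to y"; only its restriction to X
   matters.  It must be a strict linear order on X. *)
Definition is_pref (a b : nat) (R : rel nat) : Prop :=
  [/\ (forall x, inX a b x -> ~~ R x x),
      (forall x y z, inX a b x -> inX a b y -> inX a b z ->
                     R x y -> R y z -> R x z) &
      (forall x y, inX a b x -> inX a b y -> x <> y -> R x y \/ R y x)].

Definition Xseq (a b : nat) : seq nat := iota a (b - a).+1.

Definition top (a b : nat) (R : rel nat) : nat :=
  head a [seq x <- Xseq a b | all (fun y => (y == x) || R x y) (Xseq a b)].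

Definition med (s : seq nat) : nat := nth 0 (sort leq s) (size s)./2.

Definition profile (n : nat) := 'I_n -> rel nat.

Definition valid_profile (a b n : nat) (P : profile n) : Prop :=
  forall i, is_pref a b (P i).

Definition upd (n : nat) (P : profile n) (i : 'I_n) (Q : rel nat) : profile n :=
  fun j => if j == i then Q else P j.

Definition medvs (a b n : nat) (alpha : seq nat) (P : profile n) : nat :=
  med ([seq top a b (P i) | i <- enum 'I_n] ++ alpha).

Section Manip.
Variables (a b n : nat) (f : profile n -> nat).

Definition option_set (i : 'I_n) (R : rel nat) (x : nat) : Prop :=
  exists P : profile n, valid_profile a b P /\ x = f (upd P i R).

Definition is_worst (R : rel nat) (O : nat -> Prop) (w : nat) : Prop :=
  O w /\ forall y, O y -> y <> w -> R y w.
Definition is_best (R : rel nat) (O : nat -> Prop) (w : nat) : Prop :=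
  O w /\ forall y, O y -> y <> w -> R w y.

Definition manipulation (i : 'I_n) (R R' : rel nat) : Prop :=
  exists P : profile n, valid_profile a b P /\
    R (f (upd P i R')) (f (upd P i R)).

Definition obvious_manipulation (i : 'I_n) (R R' : rel nat) : Prop :=
  manipulation i R R' /\
  ((exists w w', is_worst R (option_set i R) w /\
                 is_worst R (option_set i R') w' /\ R w' w) \/
   (exists w w', is_best R (option_set i R) w /\
                 is_best R (option_set i R') w' /\ R w' w)).

Definition NOM : Prop :=
  forall (i : 'I_n) (R R' : rel nat), is_pref a b R -> is_pref a b R' ->
    ~ obvious_manipulation i R R'.
End Manip.

(* Main.v *)
Require Import Defs.
From mathcomp Require Import all_boot.
From mathcomp Require Import zify.
Set Implicit Arguments. Unset Strict Implicit. Unset Printing Implicit Defensive.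

Lemma half_bound k : k <= (k./2).*2.+1.
Proof. have := odd_double_half k; have := leq_b1 (odd k); lia. Qed.

Lemma sort_count (p : pred nat) s : count p (sort leq s) = count p s.
Proof. by apply/permP; apply/permEl/perm_sort. Qed.

Lemma sortedS s : sorted leq (sort leq s).
Proof. exact: (sort_sorted leq_total). Qed.

Lemma med_ge s m : (size s)./2 < count (fun y => m <= y) s -> m <= med s.
Proof.
rewrite /med => H.
set s' := sort leq s; set k := (size s)./2.
have Hs : size s' = size s by rewrite size_sort.
have Hc := count_size (fun y => m <= y) s.
have hk : k < size s' by rewrite Hs; apply: leq_trans H Hc.
rewrite leqNgt; apply/negP => Hlt.
have srt := sortedS s.
have H1 : k.+1 <= count (fun y => y < m) s'.
  have Ha : all (fun y => y < m) (take k.+1 s').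
    apply/(all_nthP 0) => j; rewrite size_takel // => hj.
    rewrite nth_take //.
    apply: leq_ltn_trans Hlt.
    apply: (sorted_leq_nth leq_trans leqnn) => //; rewrite ?inE /=; lia.
  move: Ha; rewrite all_count size_takel // => /eqP <-.
  by rewrite -{2}(cat_take_drop k.+1 s') count_cat leq_addr.
have H2 := count_predC (fun y => y < m) s'.
have H3 : count (predC (fun y => y < m)) s' = count (fun y => m <= y) s.
  by rewrite -(sort_count _ s); apply: eq_count => y /=; rewrite -leqNgt.
have := half_bound (size s); rewrite -/k; lia.
Qed.

Lemma med_le s m : (size s)./2 < count (fun y => y <= m) s -> med s <= m.
Proof.
rewrite /med => H.
set s' := sort leq s; set k := (size s)./2.
have Hs : size s' = size s by rewrite size_sort.
have Hc := count_size (fun y => y <= m) s.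
have hk : k < size s' by rewrite Hs; apply: leq_trans H Hc.
rewrite leqNgt; apply/negP => Hlt.
have srt := sortedS s.
have H1 : size s' - k <= count (fun y => m < y) s'.
  have Ha : all (fun y => m < y) (drop k s').
    apply/(all_nthP 0) => j; rewrite size_drop => hj.
    rewrite nth_drop.
    apply: leq_trans Hlt _.
    apply: (sorted_leq_nth leq_trans leqnn) => //; rewrite ?inE /=; lia.
  move: Ha; rewrite all_count size_drop => /eqP <-.
  by rewrite -{2}(cat_take_drop k s') count_cat leq_addl.
have H2 := count_predC (fun y => m < y) s'.
have H3 : count (predC (fun y => m < y)) s' = count (fun y => y <= m) s.
  by rewrite -(sort_count _ s); apply: eq_count => y /=; rewrite -leqNgt.
have := half_bound (size s); rewrite -/k; lia.
Qed.

Lemma med_eq s m : (size s)./2 < count (fun y => y <= m) s ->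
  (size s)./2 < count (fun y => m <= y) s -> med s = m.
Proof. by move=> h1 h2; apply/eqP; rewrite eqn_leq med_le // med_ge. Qed.

Lemma mem_Xseq a b (x : nat) : a <= b -> (x \in Xseq a b) = (a <= x <= b).
Proof. move=> ab; rewrite /Xseq mem_iota; apply/idP/idP => /andP[h1 h2]; apply/andP; split=> //; lia. Qed.

Lemma ex_max a b R s : is_pref a b R -> s != [::] ->
  (forall x, x \in s -> inX a b x) ->
  exists2 t, t \in s & all (fun y => (y == t) || R t y) s.
Proof.
case=> irr tr tot; elim: s => [//|x s IH] _ hs.
have hx : inX a b x by apply: hs; rewrite inE eqxx.
case: s IH hs => [|y s] IH hs.
  by exists x; rewrite ?inE ?eqxx //= eqxx.
have [|t ts ht] := IH isT.
  by move=> z hz; apply: hs; rewrite inE hz orbT.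
have htX : inX a b t by apply: hs; rewrite inE ts orbT.
case hxt: (R x t).
  exists x; first by rewrite inE eqxx.
  apply/allP => z; rewrite inE => /orP [/eqP ->|hz]; first by rewrite eqxx.
  move/allP: ht => /(_ z hz) /orP [/eqP ->|hz']; first by rewrite hxt orbT.
  by apply/orP; right; apply: (tr x t z) => //; apply: hs; rewrite inE hz orbT.
exists t; first by rewrite inE ts orbT.
rewrite /=; apply/andP; split => //.
case: (x =P t) => [->|ne] //.
have [h|h] := tot x t hx htX ne; first by rewrite h in hxt.
by rewrite h orbT.
Qed.

Lemma top_max a b R : a <= b -> is_pref a b R ->
  inX a b (top a b R) /\ forall y, inX a b y -> y <> top a b R -> R (top a b R) y.
Proof.
move=> ab hR.
have Xne : Xseq a b != [::] by [].
have [t ht hall] : exists2 t, t \in Xseq a b & all (fun y => (y == t) || R t y) (Xseq a b).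
  by apply: ex_max hR Xne _ => x; rewrite mem_Xseq.
rewrite /top.
have tin : t \in [seq x <- Xseq a b | all (fun y => (y == x) || R x y) (Xseq a b)].
  by rewrite mem_filter hall ht.
case E: [seq x <- Xseq a b | all (fun y => (y == x) || R x y) (Xseq a b)] tin => [|h l] //= _.
have : h \in [seq x <- Xseq a b | all (fun y => (y == x) || R x y) (Xseq a b)].
  by rewrite E mem_head.
rewrite mem_filter => /andP[hh hX].
split; first by rewrite /inX -mem_Xseq.
move=> y hy ne; move/allP: hh => /(_ y); rewrite mem_Xseq // => /(_ hy) /orP [/eqP|] //.
Qed.

Lemma top_eq a b R c : is_pref a b R -> inX a b c ->
  (forall y, inX a b y -> y <> c -> R c y) -> top a b R = c.
Proof.
move=> hR hc hmax.
have ab : a <= b by case/andP: hc => h1 h2; apply: leq_trans h2.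
have [ht htop] := @top_max a b R ab hR.
case: (top a b R =P c) => // ne.
case: hR => irr tr _.
have h1 := hmax _ ht ne.
have h2 := htop _ hc (fun e => ne (esym e)).
by have := irr _ hc; rewrite (tr _ _ _ hc ht hc h1 h2).
Qed.

Definition pref_of (rk : nat -> nat) : rel nat := fun x y => rk x < rk y.

Lemma pref_of_ok a b rk :
  (forall x y, inX a b x -> inX a b y -> rk x = rk y -> x = y) ->
  is_pref a b (pref_of rk).
Proof.
move=> inj; split.
- by move=> x _; rewrite /pref_of ltnn.
- by move=> x y z _ _ _; rewrite /pref_of; apply: ltn_trans.
- move=> x y hx hy ne; rewrite /pref_of.
  case: (ltngtP (rk x) (rk y)) => h; [by left|by right|].
  by case: ne; apply: inj.
Qed.

Definition topped (c : nat) : rel nat :=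
  pref_of (fun x => if x == c then 0 else x.+1).

Lemma topped_ok a b c : is_pref a b (topped c).
Proof.
apply: pref_of_ok => x y _ _.
by case: eqP => [->|hx]; case: eqP => [->|hy] // [].
Qed.

Lemma top_topped a b c : inX a b c -> top a b (topped c) = c.
Proof.
move=> hc; apply: top_eq => //; first exact: topped_ok.
by move=> y _ ne; rewrite /topped /pref_of eqxx; case: eqP.
Qed.

Lemma half_size n : 1 <= n -> (n + n.-1)./2 = n.-1.
Proof.
move=> h; rewrite (_ : n + n.-1 = (n.-1).*2.+1); last by rewrite -addnn; lia.
by rewrite /= uphalf_double.
Qed.

Definition tops a b n (Q : profile n) := [seq top a b (Q j) | j <- enum 'I_n].

Lemma medvsE a b n alpha (Q : profile n) : medvs a b alpha Q = med (tops a b Q ++ alpha).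
Proof. by []. Qed.

Lemma size_in a b n alpha (Q : profile n) : size alpha = n.-1 -> 1 <= n ->
  (size (tops a b Q ++ alpha))./2 = n.-1.
Proof. by move=> hs h; rewrite size_cat size_map size_enum_ord hs half_size. Qed.

Lemma cnt_i a b n (P : profile n) i Q (p : pred nat) :
  p (top a b Q) -> 0 < count p (tops a b (upd P i Q)).
Proof.
move=> h; rewrite /tops count_map -has_count; apply/hasP; exists i; first by rewrite mem_enum.
by rewrite /= /upd eqxx.
Qed.

Lemma cnt_others a b n (P : profile n) i Q (p : pred nat) :
  (forall j, j != i -> p (top a b (P j))) -> n.-1 <= count p (tops a b (upd P i Q)).
Proof.
move=> h; rewrite /tops count_map.
apply: leq_trans (sub_count (a1 := predC1 i) _ _).
  have := count_predC (pred1 i) (enum 'I_n).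
  rewrite size_enum_ord count_uniq_mem ?enum_uniq // mem_enum /= add1n => E; rewrite -[X in X.-1 <= _]E; exact: leqnn.
by move=> j /= hj; rewrite /upd (negbTE hj); apply: h.
Qed.

Lemma cnt_all a b n (P : profile n) i Q (p : pred nat) :
  p (top a b Q) -> (forall j, j != i -> p (top a b (P j))) ->
  count p (tops a b (upd P i Q)) = n.
Proof.
move=> h1 h2; rewrite /tops count_map -[RHS](size_enum_ord n); apply/eqP; rewrite -all_count.
apply/allP => j _ /=; rewrite /upd; case: eqP => [_|/eqP ne] //; exact: h2.
Qed.

Lemma cntA_all (alpha : seq nat) (p : pred nat) :
  (forall x, x \in alpha -> p x) -> count p alpha = size alpha.
Proof. by move=> h; apply/eqP; rewrite -all_count; apply/allP. Qed.

Lemma cntA_one (alpha : seq nat) (p : pred nat) x :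
  x \in alpha -> p x -> 0 < count p alpha.
Proof. by move=> hx hp; rewrite -has_count; apply/hasP; exists x. Qed.

Lemma alpha_bounds n (alpha : seq nat) x : 2 <= n -> size alpha = n.-1 -> sorted leq alpha ->
  x \in alpha -> nth 0 alpha 0 <= x <= nth 0 alpha (n - 2).
Proof.
move=> hn hs srt hx.
have hi : index x alpha < size alpha by rewrite index_mem.
rewrite -[x](nth_index 0 hx); apply/andP; split;
  apply: (sorted_leq_nth leq_trans leqnn) => //; rewrite ?inE /=; lia.
Qed.

Lemma alpha_mem n (alpha : seq nat) : 2 <= n -> size alpha = n.-1 ->
  nth 0 alpha 0 \in alpha /\ nth 0 alpha (n - 2) \in alpha.
Proof. move=> hn hs; split; apply: mem_nth; rewrite hs; lia. Qed.

Lemma opt_bounds a b n (alpha : seq nat) i R (P : profile n) :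
  2 <= n -> size alpha = n.-1 -> sorted leq alpha ->
  minn (top a b R) (nth 0 alpha 0) <= medvs a b alpha (upd P i R) <=
  maxn (top a b R) (nth 0 alpha (n - 2)).
Proof.
move=> hn hs srt; rewrite medvsE; apply/andP; split.
- apply: med_ge; rewrite size_in ?count_cat; try lia.
  have h1 := @cnt_i a b n P i R (fun y => minn (top a b R) (nth 0 alpha 0) <= y) (geq_minl _ _).
  rewrite (@cntA_all alpha) ?hs; first lia.
  move=> x hx /=; have := alpha_bounds hn hs srt hx; lia.
- apply: med_le; rewrite size_in ?count_cat; try lia.
  have h1 := @cnt_i a b n P i R (fun y => y <= maxn (top a b R) (nth 0 alpha (n - 2))) (leq_maxl _ _).
  rewrite (@cntA_all alpha) ?hs; first lia.
  move=> x hx /=; have := alpha_bounds hn hs srt hx; lia.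
Qed.

Lemma opt_lower a b n (alpha : seq nat) i R x :
  2 <= n -> size alpha = n.-1 -> sorted leq alpha -> inX a b x ->
  nth 0 alpha 0 <= x <= nth 0 alpha (n - 2) ->
  option_set a b (@medvs a b n alpha) i R x.
Proof.
move=> hn hs srt hx /andP[h1 h2].
exists (fun _ => topped x); split; first by move=> j; apply: topped_ok.
have [m1 m2] := alpha_mem hn hs.
rewrite medvsE; apply/esym/med_eq; rewrite size_in ?count_cat; try lia.
- have := @cnt_others a b n (fun _ => topped x) i R (fun y => y <= x).
  rewrite top_topped // leqnn => /(_ (fun _ _ => isT)).
  have := cntA_one (p := fun y => y <= x) m1 h1; lia.
- have := @cnt_others a b n (fun _ => topped x) i R (fun y => x <= y).
  rewrite top_topped // leqnn => /(_ (fun _ _ => isT)).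
  have := cntA_one (p := fun y => x <= y) m2 h2; lia.
Qed.

Lemma opt_top a b n (alpha : seq nat) i R :
  2 <= n -> size alpha = n.-1 -> inX a b (top a b R) ->
  option_set a b (@medvs a b n alpha) i R (top a b R).
Proof.
move=> hn hs hx; set t := top a b R.
exists (fun _ => topped t); split; first by move=> j; apply: topped_ok.
rewrite medvsE; apply/esym/med_eq; rewrite size_in ?count_cat; try lia.
- rewrite (@cnt_all a b n (fun _ => topped t) i R (fun y => y <= t)) //=; last by move=> j _; rewrite top_topped.
  lia.
- rewrite (@cnt_all a b n (fun _ => topped t) i R (fun y => t <= y)) //=; last by move=> j _; rewrite top_topped.
  lia.
Qed.

Lemma suff_NOM n a b (alpha : seq nat) :
  2 <= n -> a < b -> size alpha = n.-1 -> sorted leq alpha ->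
  (forall x, x \in alpha -> inX a b x) ->
  nth 0 alpha 0 <= a.+1 -> b.-1 <= nth 0 alpha (n - 2) ->
  NOM a b (@medvs a b n alpha).
Proof.
move=> hn ab hs srt hX h1 hL i R R' hR hR' [_ hcase].
have ab' : a <= b by apply: ltnW.
have [tX tmax] := @top_max a b R ab' hR.
have [t'X _] := @top_max a b R' ab' hR'.
have [m1 mL] := alpha_mem hn hs.
have X1 := hX _ m1; have XL := hX _ mL.
have inO : forall Q y, option_set a b (@medvs a b n alpha) i Q y ->
    minn (top a b Q) (nth 0 alpha 0) <= y <= maxn (top a b Q) (nth 0 alpha (n - 2)).
  by move=> Q y [P [_ ->]]; apply: opt_bounds.
have tO := @opt_top a b n alpha i R hn hs tX.
case: hR => irr tr tot.
move: tX tmax tO; set t := top a b R => tX tmax tO.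
have wX : forall y, option_set a b (@medvs a b n alpha) i R y -> inX a b y.
  move=> y /inO; move: tX X1 XL; rewrite /inX /t; lia.
have w'X : forall y, option_set a b (@medvs a b n alpha) i R' y -> inX a b y.
  move=> y /inO; move: t'X X1 XL; rewrite /inX; lia.
have notbetter : forall w', inX a b w' -> R w' t -> False.
  move=> w' hw' H.
  case: (w' =P t) => [E|ne]; first by have := irr _ hw'; rewrite {2}E H.
  by have := irr _ tX; rewrite (tr _ _ _ tX hw' tX (tmax _ hw' ne) H).
case: hcase => [[w [w' [[Ow Hw] [[Ow' Hw'] Rww']]]]|[w [w' [[Ow Hw] [[Ow' Hw'] Rww']]]]].
- case: (w =P t) => [E|ne]; first by apply: (notbetter w'); [apply: w'X|rewrite -E].
  have hw : nth 0 alpha 0 <= w <= nth 0 alpha (n - 2).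
    have := inO _ _ Ow; move: tX ne; rewrite /inX -/t; lia.
  have Ow2 := @opt_lower a b n alpha i R' w hn hs srt (wX _ Ow) hw.
  case: (w =P w') => [E|ne']; first by have := irr _ (wX _ Ow); rewrite {1}E Rww'.
  have := Hw' _ Ow2 ne' => H.
  by have := irr _ (wX _ Ow); rewrite (tr _ _ _ (wX _ Ow) (w'X _ Ow') (wX _ Ow) H Rww').
- have E : w = t.
    case: (w =P t) => // ne.
    have H1 := Hw _ tO (fun e => ne (esym e)).
    have H2 := tmax _ (wX _ Ow) ne.
    by have := irr _ tX; rewrite (tr _ _ _ tX (wX _ Ow) tX H2 H1).
  by apply: (notbetter w'); [apply: w'X|rewrite -E].
Qed.

Definition rkA a b x := if x == a then 0 else if x == a.+1 then b.+1 else (b - x).+1.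

Lemma caseA n a b (alpha : seq nat) :
  2 <= n -> a < b -> size alpha = n.-1 -> sorted leq alpha ->
  (forall x, x \in alpha -> inX a b x) ->
  a.+2 <= nth 0 alpha 0 -> ~ NOM a b (@medvs a b n alpha).
Proof.
move=> hn ab hs srt hX h1 hNOM.
set a1 := nth 0 alpha 0; set aL := nth 0 alpha (n - 2).
have [m1 mL] := alpha_mem hn hs.
have X1 := hX _ m1; have XL := hX _ mL.
have h1L : a1 <= aL by have := alpha_bounds hn hs srt m1; lia.
have i : 'I_n by exists 0; lia.
have rkAgen : forall y, a.+2 <= y -> rkA a b y = (b - y).+1.
  by move=> y hy; rewrite /rkA ifN_eq ?ifN_eq //; apply/eqP; lia.
set R := pref_of (rkA a b).
have hR : is_pref a b R.
  apply: pref_of_ok => x y; rewrite /inX /rkA.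
  by case: (x =P a) => ?; case: (x =P a.+1) => ?; case: (y =P a) => ?; case: (y =P a.+1) => ?; lia.
have tR : top a b R = a.
  apply: top_eq => //; first by rewrite /inX leqnn; lia.
  by move=> y _ ne; rewrite /R /pref_of /rkA eqxx; case: (y =P a) => // _; case: ifP.
set R' := topped a1.
have hR' : is_pref a b R' by apply: topped_ok.
have tR' : top a b R' = a1 by rewrite top_topped.
set P : profile n := fun _ => topped a.+1.
have XA : inX a b a.+1 by move: X1; rewrite /inX; lia.
have vP : valid_profile a b P by move=> j; apply: topped_ok.
have v1 : medvs a b alpha (upd P i R) = a.+1.
  rewrite medvsE; apply: med_eq; rewrite size_in ?count_cat; try lia.
  - rewrite (@cnt_all a b n P i R (fun y => y <= a.+1)) /=; first lia.
      by rewrite tR.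
    by move=> j _; rewrite /P top_topped.
  - have := @cnt_others a b n P i R (fun y => a.+1 <= y).
    rewrite /P top_topped // leqnn => /(_ (fun _ _ => isT)).
    rewrite (@cntA_all alpha (fun y => a.+1 <= y)); first lia.
    by move=> x hx /=; have := alpha_bounds hn hs srt hx; rewrite -/a1; lia.
have v2 : medvs a b alpha (upd P i R') = a1.
  rewrite medvsE; apply: med_eq; rewrite size_in ?count_cat; try lia.
  - rewrite (@cnt_all a b n P i R' (fun y => y <= a1)) /=; first lia.
      by rewrite tR'.
    by move=> j _; rewrite /P top_topped //; lia.
  - have := @cnt_i a b n P i R' (fun y => a1 <= y); rewrite tR' leqnn => /(_ isT).
    rewrite (@cntA_all alpha (fun y => a1 <= y)); first lia.
    by move=> x hx /=; have := alpha_bounds hn hs srt hx; rewrite -/a1; lia.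
have Ra1 : R a1 a.+1.
  by rewrite /R /pref_of rkAgen // /rkA ifN_eq ?eqxx //; [lia|apply/eqP; lia].
apply: (hNOM i R R' hR hR'); split.
  by exists P; split => //; rewrite v1 v2.
left; exists a.+1, a1; split; [|split => //].
- split; first by exists P; split.
  move=> y [Q [_ ->]] ne.
  have := @opt_bounds a b n alpha i R Q hn hs srt; rewrite tR -/a1 -/aL => hb.
  move: (medvs _ _ _ _) ne hb => y' ne hb.
  have ra : rkA a b a.+1 = b.+1 by rewrite /rkA; case: eqP => [|_]; [lia|by rewrite eqxx].
  rewrite /R /pref_of ra /rkA; case: (y' =P a) => // na; case: (y' =P a.+1) => // na1; lia.
- split; first by apply: opt_lower => //; rewrite leqnn h1L.
  move=> y [Q [_ ->]] ne.
  have := @opt_bounds a b n alpha i R' Q hn hs srt; rewrite tR' -/a1 -/aL => hb.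
  rewrite /R /pref_of !rkAgen //; try lia.
  move: ne hb X1 XL; rewrite /inX -/a1 -/aL; lia.
Qed.

Definition rkB b x := if x == b then 0 else if x == b.-1 then b.+1 else x.+1.

Lemma caseB n a b (alpha : seq nat) :
  2 <= n -> a < b -> size alpha = n.-1 -> sorted leq alpha ->
  (forall x, x \in alpha -> inX a b x) ->
  (nth 0 alpha (n - 2)).+2 <= b -> ~ NOM a b (@medvs a b n alpha).
Proof.
move=> hn ab hs srt hX h1 hNOM.
set a1 := nth 0 alpha 0; set aL := nth 0 alpha (n - 2).
have [m1 mL] := alpha_mem hn hs.
have X1 := hX _ m1; have XL := hX _ mL.
move: X1 XL h1; rewrite -/a1 -/aL => X1 XL h1.
have h1L : a1 <= aL by have := alpha_bounds hn hs srt m1; lia.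
have i : 'I_n by exists 0; lia.
have rkBgen : forall y, y.+2 <= b -> rkB b y = y.+1.
  by move=> y hy; rewrite /rkB ifN_eq ?ifN_eq //; apply/eqP; lia.
have rb : rkB b b.-1 = b.+1 by rewrite /rkB; case: eqP => [|_]; [lia|by rewrite eqxx].
set R := pref_of (rkB b).
have hR : is_pref a b R.
  apply: pref_of_ok => x y; rewrite /inX /rkB.
  by case: (x =P b) => ?; case: (x =P b.-1) => ?; case: (y =P b) => ?; case: (y =P b.-1) => ?; lia.
have tR : top a b R = b.
  apply: top_eq => //; first by rewrite /inX leqnn; lia.
  by move=> y _ ne; rewrite /R /pref_of /rkB eqxx; case: (y =P b) => // _; case: ifP.
set R' := topped aL.
have hR' : is_pref a b R' by apply: topped_ok.
have tR' : top a b R' = aL by rewrite top_topped.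
set P : profile n := fun _ => topped b.-1.
have XB : inX a b b.-1 by move: XL; rewrite /inX; lia.
have vP : valid_profile a b P by move=> j; apply: topped_ok.
have v1 : medvs a b alpha (upd P i R) = b.-1.
  rewrite medvsE; apply: med_eq; rewrite size_in ?count_cat; try lia.
  - have := @cnt_others a b n P i R (fun y => y <= b.-1).
    rewrite /P top_topped // leqnn => /(_ (fun _ _ => isT)).
    rewrite (@cntA_all alpha (fun y => y <= b.-1)); first lia.
    by move=> x hx /=; have := alpha_bounds hn hs srt hx; rewrite -/aL; lia.
  - rewrite (@cnt_all a b n P i R (fun y => b.-1 <= y)) /=; first lia.
      by rewrite tR; lia.
    by move=> j _; rewrite /P top_topped.
have v2 : medvs a b alpha (upd P i R') = aL.
  rewrite medvsE; apply: med_eq; rewrite size_in ?count_cat; try lia.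
  - have := @cnt_i a b n P i R' (fun y => y <= aL); rewrite tR' leqnn => /(_ isT).
    rewrite (@cntA_all alpha (fun y => y <= aL)); first lia.
    by move=> x hx /=; have := alpha_bounds hn hs srt hx; rewrite -/aL; lia.
  - rewrite (@cnt_all a b n P i R' (fun y => aL <= y)) /=; first lia.
      by rewrite tR'.
    by move=> j _; rewrite /P top_topped //; lia.
have RaL : R aL b.-1.
  by rewrite /R /pref_of rkBgen // rb; lia.
apply: (hNOM i R R' hR hR'); split.
  by exists P; split => //; rewrite v1 v2.
left; exists b.-1, aL; split; [|split => //].
- split; first by exists P; split.
  move=> y [Q [_ ->]] ne.
  have := @opt_bounds a b n alpha i R Q hn hs srt; rewrite tR -/a1 -/aL => hb.
  move: (medvs _ _ _ _) ne hb => y' ne hb.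
  rewrite /R /pref_of rb /rkB; case: (y' =P b) => // na; case: (y' =P b.-1) => // na1; lia.
- split; first by apply: opt_lower => //; rewrite leqnn h1L.
  move=> y [Q [_ ->]] ne.
  have := @opt_bounds a b n alpha i R' Q hn hs srt; rewrite tR' -/a1 -/aL => hb.
  move: (medvs _ _ _ _) ne hb => y' ne hb.
  rewrite /R /pref_of !rkBgen //; lia.
Qed.

Theorem theorem2 (n a b : nat) (alpha : seq nat) :
  2 <= n -> a < b ->
  size alpha = n.-1 ->
  sorted leq alpha ->
  (forall x, x \in alpha -> inX a b x) ->
  NOM a b (@medvs a b n alpha) <->
  (nth 0 alpha 0 \in [:: a; a.+1]) /\ (nth 0 alpha (n - 2) \in [:: b.-1; b]).
Proof.
move=> hn ab hs srt hX.
have [m1 mL] := alpha_mem hn hs.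
have X1 := hX _ m1; have XL := hX _ mL.
move: X1 XL; rewrite /inX => X1 XL.
split.
- move=> hN; split.
  + have : nth 0 alpha 0 <= a.+1.
      rewrite leqNgt; apply/negP => h; exact: (caseA hn ab hs srt hX h hN).
    move=> h; rewrite !inE; apply/orP.
    by case: (nth 0 alpha 0 =P a) => [|ne]; [left|right; apply/eqP; lia].
  + have : b <= (nth 0 alpha (n - 2)).+1.
      rewrite leqNgt; apply/negP => h; exact: (caseB hn ab hs srt hX h hN).
    move=> h; rewrite !inE; apply/orP.
    by case: (nth 0 alpha (n - 2) =P b) => [|ne]; [right|left; apply/eqP; lia].
- rewrite !inE => -[/orP h1 /orP h2]; apply: suff_NOM => //.
  + by case: h1 => /eqP ->.
  + by case: h2 => /eqP ->; lia.
Qed.
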